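(* For all $n\ge 1$, \[\left|\mathrm{Av}_{n+2}[\overline{132},\overline{213},\overline{321}]\right|=\left|\mathcal{R}_n\right|.\]
   Context: For $\sigma\in S_m$, the cyclic permutation $[\sigma]$ is the set of all rotations of $\sigma$. $[\sigma]$ contains the totally vincular cyclic pattern $[\overline{abc}]$ (with $abc\in S_3$) if there are three cyclically consecutive entries $\sigma_i\sigma_{i+1}\sigma_{i+2}$ (indices mod $m$) order-isomorphic to $abc$; $\mathrm{Av}_m[\overline{132},\overline{213},\overline{321}]$ is the set of cyclic permutations of length $m$ containing none of these three patterns. A partial cyclic order on a set $X$ is a ternary relation $Z\subseteq X^3$ such that for all $x,y,z,u\in X$: $(x,y,z)\in Z\Rightarrow(y,z,x)\in Z$; $(x,y,z)\in Z\Rightarrow(z,y,x)\notin Z$; and $(x,y,z)\in Z$ and $(x,z,u)\in Z\Rightarrow(x,y,u)\in Z$. It is a total cyclic order if for every triple $(x,y,z)$ of distinct elements, $(x,y,z)\in Z$ or $(z,y,x)\in Z$. $\mathcal{R}_n$ is the set of total cyclic orders $Z$ on $[n+2]$ with $(i,i+1,i+2)\in Z$ for all $1\le i\le n$, $(n+1,n+2,1)\in Z$ and $(n+2,1,2)\in Z$. *)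

(* Defs.v *)
From mathcomp Require Import all_boot all_fingroup.
Set Implicit Arguments. Unset Strict Implicit. Unset Printing Implicit Defensive.

(* Conventions: [m] = {1..m} is represented by 'I_m = {0..m-1} (value v <-> v+1);
   a permutation sigma in S_m is a {perm 'I_m}, with sigma_i = s i (0-indexed). *)

Definition cshift (m : nat) (i : 'I_m) (k : nat) : 'I_m :=
  Ordinal (ltn_pmod (i + k) (leq_ltn_trans (leq0n i) (ltn_ord i))).

Definition cycperm (m : nat) (s : {perm 'I_m}) : {set {perm 'I_m}} :=
  [set t : {perm 'I_m} | [exists k : 'I_m, [forall i : 'I_m, t i == s (cshift i k)]]].

Definition order_iso3 (x p : nat -> nat) : bool :=
  [forall j : 'I_3, forall k : 'I_3, (x j < x k) == (p j < p k)].

Definition contains_tv (m : nat) (s : {perm 'I_m}) (p : nat -> nat) : bool :=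
  [exists i : 'I_m, order_iso3 (fun j => nat_of_ord (s (cshift i j))) p].

Definition pat132 (j : nat) : nat := nth 0 [:: 1; 3; 2] j.
Definition pat213 (j : nat) : nat := nth 0 [:: 2; 1; 3] j.
Definition pat321 (j : nat) : nat := nth 0 [:: 3; 2; 1] j.

Definition avoids3 (m : nat) (s : {perm 'I_m}) : bool :=
  [&& ~~ contains_tv s pat132, ~~ contains_tv s pat213 & ~~ contains_tv s pat321].

(* Av_m[132,213,321] : set of cyclic permutations (rotation classes) of length m
   avoiding the three patterns (containment is rotation invariant). *)
Definition Av (m : nat) : {set {set {perm 'I_m}}} :=
  [set cycperm s | s in [set s : {perm 'I_m} | avoids3 s]].

Definition partial_cyclic_order (X : finType) (Z : {set X * X * X}) : bool :=
  [forall x : X, forall y : X, forall z : X, forall u : X,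
    [&& ((x, y, z) \in Z) ==> ((y, z, x) \in Z),
        ((x, y, z) \in Z) ==> ((z, y, x) \notin Z) &
        (((x, y, z) \in Z) && ((x, z, u) \in Z)) ==> ((x, y, u) \in Z)]].

Definition total_cyclic_order (X : finType) (Z : {set X * X * X}) : bool :=
  partial_cyclic_order Z &&
  [forall x : X, forall y : X, forall z : X,
    [&& x != y, y != z & x != z] ==> (((x, y, z) \in Z) || ((z, y, x) \in Z))].

(* R_n : total cyclic orders Z on [n+2] (0-indexed: 'I_(n+2)) with
   (i,i+1,i+2) in Z for 1<=i<=n, (n+1,n+2,1) in Z, (n+2,1,2) in Z. *)
Definition Rn (n : nat) : {set {set 'I_n.+2 * 'I_n.+2 * 'I_n.+2}} :=
  [set Z : {set 'I_n.+2 * 'I_n.+2 * 'I_n.+2} |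
    [&& total_cyclic_order Z,
        [forall i : 'I_n.+2, (i < n) ==>
           ((inord i, inord i.+1, inord i.+2) \in Z)],
        ((inord n, inord n.+1, inord 0) \in Z) &
        ((inord n.+1, inord 0, inord 1) \in Z)]].

(* Main.v *)
Set Warnings "-notation-overridden,-ambiguous-paths".
Require Import Defs.
From mathcomp Require Import all_boot all_fingroup all_algebra zify.
Import GRing.Theory.
Set Implicit Arguments. Unset Strict Implicit. Unset Printing Implicit Defensive.

Lemma cshiftE n (i : 'I_n.+2) k : cshift i k = (i + inZp k)%R.
Proof. apply: val_inj => /=. by rewrite modnDmr. Qed.

Lemma cshift0 n (i : 'I_n.+2) : cshift i 0 = i.
Proof. apply: val_inj => /=. by rewrite addn0 modn_small. Qed.

Definition rotp n (k : 'I_n.+2) : {perm 'I_n.+2} := perm (@addIr _ k).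
Lemma rotpE n (k i : 'I_n.+2) : rotp k i = (i + k)%R.
Proof. by rewrite permE. Qed.

Lemma order_iso3_ext x y p : x =1 y -> order_iso3 x p = order_iso3 y p.
Proof.
move=> E; rewrite /order_iso3; apply: eq_forallb => j; apply: eq_forallb => l.
by rewrite !E.
Qed.

Lemma contains_rot n (s : {perm 'I_n.+2}) k p :
  contains_tv (rotp k * s)%g p -> contains_tv s p.
Proof.
case/existsP=> i H; apply/existsP; exists (i + k)%R.
rewrite -(order_iso3_ext (x := fun j : nat => nat_of_ord ((rotp k * s)%g (cshift i j)))) // => j.
by rewrite permM rotpE !cshiftE addrAC.
Qed.

Lemma avoids_rot n (s : {perm 'I_n.+2}) k : avoids3 s -> avoids3 (rotp k * s)%g.
Proof.
case/and3P=> h1 h2 h3; apply/and3P; split; apply/negP => /contains_rot => h;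
  by [rewrite h in h1|rewrite h in h2|rewrite h in h3].
Qed.

Lemma inZp_val n (x : 'I_n.+2) : inZp x = x.
Proof. by apply: val_inj => /=; rewrite modn_small. Qed.

Lemma cycperm_rot n (s : {perm 'I_n.+2}) k : cycperm (rotp k * s)%g = cycperm s.
Proof.
apply/setP => t; rewrite !inE; apply/existsP/existsP => [[k' /forallP H]|[k' /forallP H]].
- exists (k' + k)%R; apply/forallP => i.
  by rewrite (eqP (H i)) permM rotpE !cshiftE !inZp_val addrA.
- exists (k' - k)%R; apply/forallP => i.
  by rewrite (eqP (H i)) permM rotpE !cshiftE !inZp_val addrA subrK.
Qed.

Lemma cycperm_self n (s : {perm 'I_n.+2}) : s \in cycperm s.
Proof. rewrite inE; apply/existsP; exists ord0; apply/forallP => i. by rewrite cshift0. Qed.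

Lemma cshift_val0 n (k : 'I_n.+2) : cshift ord0 k = k.
Proof. by apply: val_inj => /=; rewrite add0n modn_small. Qed.

Definition S0 n := [set s : {perm 'I_n.+2} | avoids3 s && (s ord0 == ord0)].

Lemma cycperm_inj n : {in S0 n &, injective (@cycperm n.+2)}.
Proof.
move=> s t; rewrite !inE => /andP[_ /eqP s0] /andP[_ /eqP t0] E.
have := cycperm_self s; rewrite E inE => /existsP[k /forallP H].
have H0 := eqP (H ord0); rewrite s0 -{1}t0 in H0.
have {}H0 := perm_inj H0.
apply/permP => i; rewrite (eqP (H i)).
congr (t _); rewrite cshift_val0 in H0; rewrite -H0 cshift0 //.
Qed.

Lemma partA n : #|Av n.+2| = #|S0 n|.
Proof.
suff -> : Av n.+2 = (@cycperm n.+2) @: S0 n by rewrite (card_in_imset (@cycperm_inj n)).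
apply/setP => C; apply/imsetP/imsetP => [[s]|[s]].
- rewrite inE => hs ->.
  exists (rotp (s^-1 ord0)%g * s)%g; last by rewrite cycperm_rot.
  rewrite inE avoids_rot //= permM rotpE add0r permKV.
  by [].
- rewrite inE => /andP[hs _] ->; exists s => //; by rewrite inE.
Qed.
Definition cyc3 (x y z : nat) : bool :=
  [|| (x < y) && (y < z), (y < z) && (z < x) | (z < x) && (x < y)].

Lemma forall_I3 (P : 'I_3 -> bool) :
  [forall j, P j] = [&& P (@Ordinal 3 0 isT), P (@Ordinal 3 1 isT) & P (@Ordinal 3 2 isT)].
Proof.
apply/forallP/and3P => [H|[H0 H1 H2] [[|[|[|j]]] hj]] //; try by split; apply: H.
- by rewrite (_ : Ordinal hj = Ordinal (isT : 0 < 3)) //; apply: val_inj.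
- by rewrite (_ : Ordinal hj = Ordinal (isT : 1 < 3)) //; apply: val_inj.
- by rewrite (_ : Ordinal hj = Ordinal (isT : 2 < 3)) //; apply: val_inj.
Qed.

Lemma pat_cyc (x : nat -> nat) : x 0 != x 1 -> x 1 != x 2 -> x 0 != x 2 ->
  [&& ~~ order_iso3 x pat132, ~~ order_iso3 x pat213 & ~~ order_iso3 x pat321]
  = cyc3 (x 0) (x 1) (x 2).
Proof.
move=> h01 h12 h02.
rewrite /order_iso3 forall_I3 /= !forall_I3 /= /cyc3 !ltnn.
move: h01 h12 h02.
case: (ltngtP (x 0) (x 1)) => // a; case: (ltngtP (x 1) (x 2)) => // b;
case: (ltngtP (x 0) (x 2)) => // c _ _ _ /=; lia.
Qed.
Definition ltZ (X : finType) (Z : {set X * X * X}) (x0 d a : X) : bool :=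
  ((d == x0) && (a != x0)) || ((x0, d, a) \in Z).
Definition rankZ (X : finType) (Z : {set X * X * X}) (x0 a : X) : nat :=
  #|[set d | ltZ Z x0 d a]|.

Lemma cyc_12 x y z : x < y -> y < z -> cyc3 x y z.
Proof. by rewrite /cyc3 => -> ->. Qed.
Lemma cyc_23 x y z : y < z -> z < x -> cyc3 x y z.
Proof. by rewrite /cyc3 => -> ->; rewrite orbT. Qed.
Lemma cyc_31 x y z : z < x -> x < y -> cyc3 x y z.
Proof. by rewrite /cyc3 => -> ->; rewrite !orbT. Qed.

Section Gen.
Variables (X : finType) (Z : {set X * X * X}) (x0 : X).
Hypothesis tco : total_cyclic_order Z.

Lemma Zax x y z u : [&& ((x, y, z) \in Z) ==> ((y, z, x) \in Z),
        ((x, y, z) \in Z) ==> ((z, y, x) \notin Z) &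
        (((x, y, z) \in Z) && ((x, z, u) \in Z)) ==> ((x, y, u) \in Z)].
Proof. by case/andP: tco => /forallP/(_ x)/forallP/(_ y)/forallP/(_ z)/forallP/(_ u). Qed.

Lemma Zrot x y z : (x, y, z) \in Z -> (y, z, x) \in Z.
Proof. by case/and3P: (Zax x y z x) => /implyP. Qed.
Lemma Zasym x y z : (x, y, z) \in Z -> (z, y, x) \notin Z.
Proof. by case/and3P: (Zax x y z x) => _ /implyP. Qed.
Lemma Ztr x y z u : (x, y, z) \in Z -> (x, z, u) \in Z -> (x, y, u) \in Z.
Proof. by case/and3P: (Zax x y z u) => _ _ /implyP H a b; apply: H; rewrite a b. Qed.
Lemma Ztot x y z : x != y -> y != z -> x != z -> ((x, y, z) \in Z) || ((z, y, x) \in Z).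
Proof.
case/andP: tco => _ /forallP/(_ x)/forallP/(_ y)/forallP/(_ z)/implyP H a b c.
by apply: H; rewrite a b c.
Qed.
Lemma Zne13 x y z : (x, y, z) \in Z -> x != z.
Proof. move=> h; apply/eqP => e; move: h (Zasym h); rewrite e => ->. by []. Qed.
Lemma Zne12 x y z : (x, y, z) \in Z -> x != y.
Proof. by move=> /Zrot /Zne13; rewrite eq_sym. Qed.
Lemma Zne23 x y z : (x, y, z) \in Z -> y != z.
Proof. by move=> /Zrot /Zne12. Qed.

Local Notation lt := (ltZ Z x0).

Lemma lt_irr a : lt a a = false.
Proof.
rewrite /ltZ andbN /=; apply/negP => /Zne23; by rewrite eqxx.
Qed.

Lemma lt_trans a b c : lt a b -> lt b c -> lt a c.
Proof.
rewrite /ltZ => /orP[/andP[/eqP -> b0]|h1] /orP[/andP[/eqP e _]|h2].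
- by rewrite e eqxx in b0.
- by rewrite eqxx /= eq_sym (Zne13 h2).
- by move: (Zne13 h1); rewrite e eqxx.
- by rewrite (Ztr h1 h2) orbT.
Qed.

Lemma lt_total a b : a != b -> lt a b || lt b a.
Proof.
rewrite /ltZ => ab.
case: (eqVneq a x0) => [e|a0]; first by rewrite /= -e eq_sym ab.
case: (eqVneq b x0) => [e|b0]; first by rewrite /= orbT.
rewrite /=.
have x0a : x0 != a by rewrite eq_sym.
have x0b : x0 != b by rewrite eq_sym.
case/orP: (Ztot x0a ab x0b) => [->//|/Zrot /Zrot ->]; by rewrite orbT.
Qed.

Lemma ZL a b c : lt a b -> lt b c -> (a, b, c) \in Z.
Proof.
rewrite /ltZ => /orP[/andP[/eqP -> b0]|h1] /orP[/andP[/eqP e _]|h2].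
- by rewrite e eqxx in b0.
- by [].
- by move: (Zne13 h1); rewrite e eqxx.
- exact: (Zrot (Zrot (Ztr (Zrot h2) (Zrot (Zrot h1))))).
Qed.

Definition rk a := rankZ Z x0 a.

Lemma rk_lt a b : lt a b -> rk a < rk b.
Proof.
move=> ab; apply: proper_card; apply/properP; split.
- apply/subsetP => d; rewrite !inE => da; exact: lt_trans da ab.
- by exists a; rewrite !inE // lt_irr.
Qed.

Lemma rk_inj : injective rk.
Proof.
move=> a b e; apply/eqP; apply/negP => /negP /lt_total /orP[] /rk_lt; by rewrite e ltnn.
Qed.

Lemma rk_bound a : rk a < #|X|.
Proof.
rewrite -cardsT; apply: proper_card; apply/properP; split; first exact: subsetT.
by exists a; rewrite !inE // lt_irr.
Qed.

Lemma rk_x0 : rk x0 = 0.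
Proof.
apply/eqP; rewrite cards_eq0; apply/eqP/setP => d; rewrite !inE /ltZ eqxx andbF /=.
by apply/negP => /Zne13; rewrite eqxx.
Qed.

Lemma rk_key a b c : ((a, b, c) \in Z) = cyc3 (rk a) (rk b) (rk c).
Proof.
have H : forall a b c, (a, b, c) \in Z -> cyc3 (rk a) (rk b) (rk c).
  move=> {}a {}b {}c h.
  have ab := Zne12 h; have bc := Zne23 h; have ac := Zne13 h.
  have r1 := Zrot h; have r2 := Zrot r1.
  have ca : c != a by rewrite eq_sym.
  case/orP: (lt_total ab) => hab; case/orP: (lt_total bc) => hbc;
  case/orP: (lt_total ca) => hca.
  - exact: cyc_12 (rk_lt hab) (rk_lt hbc).
  - exact: cyc_12 (rk_lt hab) (rk_lt hbc).
  - exact: cyc_31 (rk_lt hca) (rk_lt hab).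
  - by move: (Zasym r1); rewrite (ZL hca hbc).
  - exact: cyc_23 (rk_lt hbc) (rk_lt hca).
  - by move: (Zasym r2); rewrite (ZL hab hca).
  - by move: (Zasym h); rewrite (ZL hbc hab).
  - by move: (Zasym r1); rewrite (ZL hca hbc).
apply/idP/idP; first exact: H.
move=> hc; apply/negPn/negP => hn.
have ab : a != b by apply/eqP => e; move: hc; rewrite e /cyc3; lia.
have bc : b != c by apply/eqP => e; move: hc; rewrite e /cyc3; lia.
have ac : a != c by apply/eqP => e; move: hc; rewrite e /cyc3; lia.
case/orP: (Ztot ab bc ac) => h; first by rewrite h in hn.
move: (H _ _ _ h) hc; rewrite /cyc3; lia.
Qed.
End Gen.

Definition good n (t : {perm 'I_n.+2}) :=
  [forall i, cyc3 (t i) (t (cshift i 1)) (t (cshift i 2))].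

Lemma cshiftI n (i : 'I_n.+2) k : cshift i k = inord ((i + k) %% n.+2).
Proof. by apply: val_inj => /=; rewrite inordK // ltn_mod. Qed.

Lemma cshift_ne n (i : 'I_n.+2) j k : j < n.+2 -> k < n.+2 -> j != k ->
  cshift i j != cshift i k.
Proof.
move=> hj hk jk; rewrite !cshiftE; apply/negP => /eqP /addrI /(congr1 val) /=.
by rewrite !modn_small //; apply/eqP.
Qed.

Lemma tne n (t : {perm 'I_n.+2}) (i : 'I_n.+2) j k : j < n.+2 -> k < n.+2 -> j != k ->
  (t (cshift i j) : nat) != t (cshift i k).
Proof. by move=> hj hk jk; rewrite val_eqE (inj_eq perm_inj) cshift_ne. Qed.

Lemma avoids_good n (t : {perm 'I_n.+2}) : 1 <= n -> avoids3 t = good t.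
Proof.
move=> hn.
have D i := pat_cyc (x := fun j => nat_of_ord (t (cshift i j)))
   (tne t i (isT : 0 < n.+2) (isT : 1 < n.+2) isT)
   (tne t i (isT : 1 < n.+2) (hn : 2 < n.+2) isT)
   (tne t i (isT : 0 < n.+2) (hn : 2 < n.+2) isT).
have D' i : [&& ~~ order_iso3 (fun j => nat_of_ord (t (cshift i j))) pat132,
    ~~ order_iso3 (fun j => nat_of_ord (t (cshift i j))) pat213 &
    ~~ order_iso3 (fun j => nat_of_ord (t (cshift i j))) pat321] =
    cyc3 (t i) (t (cshift i 1)) (t (cshift i 2)).
  by rewrite (D i) /= cshift0.
apply/idP/forallP => [/and3P[h1 h2 h3] i | H].
- rewrite -D'.
  apply/and3P; split; apply/negP => h.
  + by move/negP: h1; apply; apply/existsP; exists i.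
  + by move/negP: h2; apply; apply/existsP; exists i.
  + by move/negP: h3; apply; apply/existsP; exists i.
- apply/and3P; split; apply/negP => /existsP [i hi];
  have := H i; by rewrite -D' hi //= ?andbF.
Qed.

Lemma Rn_cond n (Z : {set 'I_n.+2 * 'I_n.+2 * 'I_n.+2}) :
  [&& [forall i : 'I_n.+2, (i < n) ==>
           ((inord i, inord i.+1, inord i.+2) \in Z)],
        ((inord n, inord n.+1, inord 0) \in Z) &
        ((inord n.+1, inord 0, inord 1) \in Z)]
  = [forall i : 'I_n.+2, (i, cshift i 1, cshift i 2) \in Z].
Proof.
have m1 : (n + 2) %% n.+2 = 0 by rewrite addn2 modnn.
have m2 : (n.+1 + 1) %% n.+2 = 0 by rewrite addn1 modnn.
have m3 : (n.+1 + 2) %% n.+2 = 1 by rewrite addn2 -addn1 addnC modnDr.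
have m4 : (n + 1) %% n.+2 = n.+1 by rewrite addn1 modn_small.
apply/idP/forallP => [/and3P[/forallP H1 H2 H3] i | H].
- rewrite !cshiftI.
  case: (ltnP i n) => hi.
  + have := implyP (H1 i) hi.
    have e1 : (i + 1) %% n.+2 = i.+1 by rewrite addn1 modn_small // ltnS ltnW.
    have e2 : (i + 2) %% n.+2 = i.+2 by rewrite addn2 modn_small.
    by rewrite e1 e2 inord_val.
  + case: i hi => /= i i_lt hi.
    have : (i == n) || (i == n.+1) by lia.
    case/orP => /eqP e; subst i.
    * have -> : Ordinal i_lt = inord n by apply: val_inj; rewrite /= inordK.
      by rewrite m1 m4.
    * have -> : Ordinal i_lt = inord n.+1 by apply: val_inj; rewrite /= inordK.
      by rewrite m2 m3.
- apply/and3P; split.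
  + apply/forallP => i; apply/implyP => hi.
    have hi' : i < n.+2 by rewrite ltnS ltnW // ltnW.
    have e1 : (i + 1) %% n.+2 = i.+1 by rewrite addn1 modn_small // ltnS ltnW.
    have e2 : (i + 2) %% n.+2 = i.+2 by rewrite addn2 modn_small.
    by have := H (inord i); rewrite !cshiftI !inordK // e1 e2.
  + by have := H (inord n); rewrite !cshiftI !inordK // m1 m4.
  + by have := H (inord n.+1); rewrite !cshiftI !inordK // m2 m3.
Qed.

Definition Zset n (t : {perm 'I_n.+2}) : {set 'I_n.+2 * 'I_n.+2 * 'I_n.+2} :=
  [set u | cyc3 (t u.1.1) (t u.1.2) (t u.2)].

Lemma Zset_tco n (t : {perm 'I_n.+2}) : total_cyclic_order (Zset t).
Proof.
apply/andP; split.
- apply/forallP => x; apply/forallP => y; apply/forallP => z; apply/forallP => u.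
  rewrite !inE /=; apply/and3P; split; apply/implyP; rewrite /cyc3; lia.
- apply/forallP => x; apply/forallP => y; apply/forallP => z; apply/implyP.
  case/and3P => xy yz xz; rewrite !inE /=.
  have a : (t x : nat) != t y by rewrite val_eqE (inj_eq perm_inj).
  have b : (t y : nat) != t z by rewrite val_eqE (inj_eq perm_inj).
  have c : (t x : nat) != t z by rewrite val_eqE (inj_eq perm_inj).
  move: a b c; rewrite /cyc3; lia.
Qed.

Lemma card_lt_ord N k : k <= N -> #|[set v : 'I_N | v < k]| = k.
Proof.
move=> hk.
have winj : injective (widen_ord hk) by move=> x y e; apply: val_inj; exact: (congr1 val e).
have -> : [set v : 'I_N | v < k] = widen_ord hk @: [set: 'I_k].
  apply/setP => v; rewrite inE; apply/idP/imsetP => [hv | [w _ ->]] /=.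
  + by exists (Ordinal hv); [rewrite inE | apply: val_inj].
  + exact: (ltn_ord w).
by rewrite card_imset // cardsT card_ord.
Qed.

Lemma rk_Zset n (t : {perm 'I_n.+2}) a : t ord0 = ord0 ->
  rankZ (Zset t) ord0 a = t a.
Proof.
move=> t0; rewrite /rankZ.
have -> : [set d | ltZ (Zset t) ord0 d a] = t @^-1: [set v : 'I_n.+2 | v < t a].
  apply/setP => d; rewrite !inE /ltZ inE /= t0.
  rewrite -[d == ord0](inj_eq (@perm_inj _ t)) -[a == ord0](inj_eq (@perm_inj _ t)) t0 -!val_eqE /=.
  rewrite /cyc3; lia.
by rewrite card_preimset ?card_lt_ord //; [apply: ltnW; apply: ltn_ord | exact: perm_inj].
Qed.

Definition rkord n (Z : {set 'I_n.+2 * 'I_n.+2 * 'I_n.+2}) (h : total_cyclic_order Z)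
  (a : 'I_n.+2) : 'I_n.+2 :=
  Ordinal (leq_trans (rk_bound ord0 h a) (eq_leq (card_ord n.+2))).

Lemma rkord_inj n Z h : injective (@rkord n Z h).
Proof. by move=> a b /(congr1 val) /= /(rk_inj h). Qed.

Definition rkperm n Z h : {perm 'I_n.+2} := perm (@rkord_inj n Z h).

Lemma rkpermE n Z h a : (@rkperm n Z h a : nat) = rk Z ord0 a.
Proof. by rewrite permE. Qed.

Lemma partB n : 1 <= n -> #|Rn n| = #|S0 n|.
Proof.
move=> hn.
have inj : {in S0 n &, injective (@Zset n)}.
  move=> s t; rewrite !inE => /andP[_ /eqP s0] /andP[_ /eqP t0] E.
  apply/permP => a; apply: val_inj.
  by rewrite /= -(rk_Zset a s0) -(rk_Zset a t0) E.
suff -> : Rn n = (@Zset n) @: S0 n by rewrite card_in_imset.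
apply/setP => Z; rewrite inE; apply/idP/imsetP => [/andP[h hc] | [t]].
- rewrite Rn_cond in hc.
  exists (rkperm h).
  + rewrite inE avoids_good //; apply/andP; split.
    * apply/forallP => i; rewrite !rkpermE -(rk_key ord0 h).
      exact: (forallP hc i).
    * by apply/eqP/val_inj; rewrite /= rkpermE (rk_x0 ord0 h).
  + apply/setP => [[[a b] c]]; by rewrite inE /= !rkpermE (rk_key ord0 h).
- rewrite inE avoids_good // => /andP[g _] ->.
  rewrite Zset_tco /= Rn_cond; apply/forallP => i; rewrite inE /=.
  exact: (forallP g i).
Qed.

Theorem theorem4p6 (n : nat) : 1 <= n -> #|Av n.+2| = #|Rn n|.
Proof. by move=> hn; rewrite partA partB. Qed.
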